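(* Let $N\ge2$, $a\in\mathbb{R}$, $\alpha\in(0,1]$, $\sigma_r^2,\sigma_w^2\ge0$. Let $P$ be a symmetric, doubly stochastic, positive semi-definite $N\times N$ matrix with nonnegative entries and eigenvalues $-1<\lambda_N(P)\le\dots\le\lambda_2(P)<\lambda_1(P)=1$, with orthonormal eigenvectors $v_1=\mathbf 1_N/\sqrt N,v_2,\dots,v_N$, and suppose $|a|<1/|\alpha|$ and that $a(P-\alpha I_N)$ has spectral radius less than $1$. Let $\mathcal E=\{\{i,j\}: i\ne j,\ p_{ij}>0\}$ and assume some pair $\{i,j\}$, $i\neq j$, is not in $\mathcal E$. For such a pair and $\epsilon>0$, let $\Delta P(i,j)=-(\mathbf e_i-\mathbf e_j)(\mathbf e_i-\mathbf e_j)^{\mathsf T}$, $P_\epsilon=P+\epsilon\Delta P(i,j)$, $z_k(i,j)=\epsilon\, v_k^{\mathsf T}\Delta P(i,j)v_k$, and $$h_k(i,j)=\frac{z_k(i,j)\big(2(1-\alpha^2a^2)\lambda_k(P)+2a^2\alpha\lambda_k^2(P)\big)}{\big(1-a^2(\lambda_k(P)-\alpha)^2\big)^2}.$$ With $\tilde{\mathrm{MSD}}(M,\alpha)=\frac{\sigma_r^2}{1-a^2(1-\alpha)^2}+\frac1N\sum_{k=1}^N\frac{a^2\alpha^2\sigma_w^2\lambda_k^2(M)}{1-a^2(\lambda_k(M)-\alpha)^2}$, the following hold. (i) For each pair $\{i,j\}\notin\mathcal E$, as $\epsilon\to0$, $$\tilde{\mathrm{MSD}}(P_\epsilon,\alpha)-\tilde{\mathrm{MSD}}(P,\alpha)=\frac{a^2\alpha^2\sigma_w^2}{N}\sum_{k=1}^Nh_k(i,j)+\mathcal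 O(\epsilon^2),$$ so that, for $\epsilon\ll1$, the edge whose addition with weight $\epsilon$ most reduces $\tilde{\mathrm{MSD}}$ is found by solving $\min_{\{i,j\}\notin\mathcal E}\sum_{k=1}^Nh_k(i,j)$. (ii) Letting $\zeta_{\max}=\max_{k>1}|\lambda_k(P)-\alpha|$, $$\min_{\{i,j\}\notin\mathcal E}\sum_{k=1}^Nh_k(i,j)\ \ge\ \min_{\{i,j\}\notin\mathcal E}\frac{-2\epsilon\Big((1-\alpha^2a^2)(p_{ii}+p_{jj})+a^2\alpha\big([P^2]_{ii}+[P^2]_{jj}-2[P^2]_{ij}\big)\Big)}{\big(1-a^2\zeta_{\max}^2\big)^2}.$$
   Context: $\tilde{\mathrm{MSD}}(M,\alpha)$ is the steady-state mean square deviation per agent of the estimator $\tilde{x}_{i,t+1}=a(\sum_jm_{ij}\tilde{x}_{j,t}+\alpha(\sum_jm_{ij}y_{j,t}-\tilde{x}_{i,t}))$ for the model $x_{t+1}=ax_t+r_t$, $y_{i,t}=x_t+w_{i,t}$. $P_\epsilon$ corresponds to adding the edge $\{i,j\}$ with weight $\epsilon$ and subtracting $\epsilon$ from the self-reliances $p_{ii},p_{jj}$. $\mathbf e_i$ is the $i$-th standard basis vector; $[P^2]_{ij}$ is the $(i,j)$ entry of $P^2$. *)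

(* Defs.v *)
From HB Require Import structures.
From mathcomp Require Import all_boot all_order all_algebra.
From mathcomp Require Import complex.
Set Implicit Arguments. Unset Strict Implicit. Unset Printing Implicit Defensive.
Import Order.TTheory GRing.Theory Num.Theory.
Local Open Scope ring_scope.
Local Open Scope complex_scope.

Section Defs.
Variables (R : rcfType) (N : nat).

Definition spectral_radius_lt1 (A : 'M[R]_N) : Prop :=
  forall z : R[i], eigenvalue (map_mx (fun x : R => x%:C) A) z -> `|z| < 1.

Definition orth_eig (M : 'M[R]_N) (lam : 'I_N -> R) (V : 'M[R]_N) : Prop :=
  V^T *m V = 1%:M /\ forall k, M *m col k V = lam k *: col k V.

Definition ebasis (i : 'I_N) : 'cV[R]_N := delta_mx i 0.

Definition dP (i j : 'I_N) : 'M[R]_N :=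
  - ((ebasis i - ebasis j) *m (ebasis i - ebasis j)^T).

Definition Peps (P : 'M[R]_N) (eps : R) (i j : 'I_N) : 'M[R]_N :=
  P + eps *: dP i j.

Definition zk (V : 'M[R]_N) (eps : R) (i j k : 'I_N) : R :=
  eps * ((col k V)^T *m dP i j *m col k V) 0 0.

Definition hk (a alpha : R) (lam : 'I_N -> R) (V : 'M[R]_N) (eps : R)
  (i j k : 'I_N) : R :=
  zk V eps i j k * (2 * (1 - alpha ^+ 2 * a ^+ 2) * lam k
                    + 2 * a ^+ 2 * alpha * lam k ^+ 2)
  / (1 - a ^+ 2 * (lam k - alpha) ^+ 2) ^+ 2.

(* tilde MSD, computed from the eigenvalues lam of M; sr2 = sigma_r^2, sw2 = sigma_w^2 *)
Definition msd (a alpha sr2 sw2 : R) (lam : 'I_N -> R) : R :=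
  sr2 / (1 - a ^+ 2 * (1 - alpha) ^+ 2)
  + N%:R^-1 * \sum_(k < N) (a ^+ 2 * alpha ^+ 2 * sw2 * lam k ^+ 2)
                           / (1 - a ^+ 2 * (lam k - alpha) ^+ 2).

Definition nonedge (P : 'M[R]_N) (x : 'I_N * 'I_N) : bool :=
  (x.1 != x.2) && ~~ (0 < P x.1 x.2).

(* minimum of f over the nonedges; the default x0 is assumed to be a nonedge *)
Definition min_nonedge (P : 'M[R]_N) (x0 : 'I_N * 'I_N) (f : 'I_N * 'I_N -> R) : R :=
  \big[Num.min/f x0]_(x | nonedge P x) f x.

Definition zeta_max (alpha : R) (lam : 'I_N -> R) : R :=
  \big[Num.max/0]_(k < N | (0 < val k)%N) `|lam k - alpha|.

Definition bound_ij (a alpha : R) (P : 'M[R]_N) (lam : 'I_N -> R) (eps : R)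
  (i j : 'I_N) : R :=
  - 2 * eps * ((1 - alpha ^+ 2 * a ^+ 2) * (P i i + P j j)
               + a ^+ 2 * alpha * ((P *m P) i i + (P *m P) j j - 2 * (P *m P) i j))
  / (1 - a ^+ 2 * zeta_max alpha lam ^+ 2) ^+ 2.

End Defs.

(* Main.v *)
Require Import Defs.
From HB Require Import structures.
From mathcomp Require Import all_boot all_order all_algebra.
From mathcomp Require Import complex.
From mathcomp Require Import ring lra.
Import Order.TTheory GRing.Theory Num.Theory.
Local Open Scope ring_scope.
Set Implicit Arguments. Unset Strict Implicit. Unset Printing Implicit Defensive.


Section Norm.
Variable R : rcfType.

Definition sn m n (A : 'M[R]_(m, n)) : R := \sum_i \sum_j `|A i j|.

Lemma sn_ge0 m n (A : 'M[R]_(m, n)) : 0 <= sn A.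
Proof. by apply: sumr_ge0 => i _; apply: sumr_ge0. Qed.

Lemma sn_entry m n (A : 'M[R]_(m, n)) i j : `|A i j| <= sn A.
Proof.
rewrite /sn (bigD1 i) //= (bigD1 j) //= -addrA lerDl.
apply: addr_ge0; first by apply: sumr_ge0.
by apply: sumr_ge0 => ? _; apply: sumr_ge0.
Qed.

Lemma snD m n (A B : 'M[R]_(m, n)) : sn (A + B) <= sn A + sn B.
Proof.
rewrite /sn -big_split /=; apply: ler_sum => i _.
rewrite -big_split /=; apply: ler_sum => j _; rewrite mxE; exact: ler_normD.
Qed.

Lemma snZ m n c (A : 'M[R]_(m, n)) : sn (c *: A) = `|c| * sn A.
Proof.
rewrite /sn mulr_sumr; apply: eq_bigr => i _; rewrite mulr_sumr.
by apply: eq_bigr => j _; rewrite mxE normrM.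
Qed.

Lemma snN m n (A : 'M[R]_(m, n)) : sn (- A) = sn A.
Proof. by rewrite -scaleN1r snZ normrN normr1 mul1r. Qed.

Lemma snB m n (A B : 'M[R]_(m, n)) : sn (A - B) <= sn A + sn B.
Proof. by rewrite -(snN B); apply: snD. Qed.

Lemma snM m n p (A : 'M[R]_(m, n)) (B : 'M[R]_(n, p)) : sn (A *m B) <= sn A * sn B.
Proof.
rewrite /sn mulr_suml.
apply: ler_sum => i _.
apply: (@le_trans _ _ (\sum_j \sum_l `|A i l| * `|B l j|)).
  by apply: ler_sum => j _; rewrite mxE; apply: (le_trans (ler_norm_sum _ _ _));
     apply: ler_sum => l _; rewrite normrM.
rewrite exchange_big /= mulr_suml; apply: ler_sum => l _.
rewrite -mulr_sumr; apply: ler_wpM2l => //.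
rewrite (bigD1 l) //= lerDl; apply: sumr_ge0 => ? _; apply: sumr_ge0 => ? _ //.
Qed.

Lemma sn_le_mul m n p (A : 'M[R]_(m, n)) (B : 'M[R]_(n, p)) x y :
  sn A <= x -> sn B <= y -> sn (A *m B) <= x * y.
Proof.
move=> hA hB; apply: (le_trans (snM A B)); apply: ler_pM => //; exact: sn_ge0.
Qed.

Lemma sn_tr n (A : 'M[R]_n) : `|\tr A| <= sn A.
Proof.
rewrite /mxtrace; apply: (le_trans (ler_norm_sum _ _ _)); apply: ler_sum => i _.
rewrite (bigD1 i) //= lerDl; apply: sumr_ge0 => ? _ //.
Qed.

Lemma sn_eq0 m n (A : 'M[R]_(m, n)) : sn A <= 0 -> A = 0.
Proof.
move=> h; apply/matrixP => i j; rewrite mxE; apply/eqP; rewrite -normr_le0.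
exact: le_trans (sn_entry A i j) h.
Qed.

End Norm.


Section Tr.
Variable R : rcfType.
Variables (n : nat) (a alpha : R).

Definition Dm (M : 'M[R]_n) : 'M[R]_n :=
  1%:M - a ^+ 2 *: ((M - alpha%:M) *m (M - alpha%:M)).
Definition dd (x : R) := 1 - a ^+ 2 * (x - alpha) ^+ 2.

Lemma mul_colE m p (A : 'M[R]_(m, n)) (B : 'M[R]_(n, p)) i k :
  (A *m B) i k = (A *m col k B) i 0.
Proof. by rewrite !mxE; apply: eq_bigr => l _; rewrite mxE. Qed.

Lemma Dm_eig (M : 'M[R]_n) (w : 'cV[R]_n) mu :
  M *m w = mu *: w -> Dm M *m w = dd mu *: w.
Proof.
move=> h.
have h1 : (M - alpha%:M) *m w = (mu - alpha) *: w.
  by rewrite mulmxBl h mul_scalar_mx scalerBl.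
rewrite /Dm mulmxBl mul1mx -scalemxAl -mulmxA h1 -scalemxAr h1 scalerA.
by rewrite scalerA /dd scalerBl scale1r expr2 mulrA.
Qed.

Lemma trace_eig (M W X : 'M[R]_n) (mu : 'I_n -> R) :
  W^T *m W = 1%:M -> (forall k, M *m col k W = mu k *: col k W) ->
  X *m Dm M = 1%:M ->
  (forall k, dd (mu k) != 0) /\
  \sum_k mu k ^+ 2 / dd (mu k) = \tr (M *m M *m X).
Proof.
move=> hW hM hX.
have wnz k : col k W != 0.
  apply/eqP => h0; have := congr1 (fun A : 'M[R]_n => A k k) hW.
  rewrite !mxE eqxx /= big1 => [/eqP|l _]; first by rewrite eq_sym oner_eq0.
  have : col k W l 0 = 0 by rewrite h0 mxE.
  by rewrite !mxE => ->; rewrite mulr0.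
have Xw k : dd (mu k) *: (X *m col k W) = col k W.
  by rewrite scalemxAr -(Dm_eig (hM k)) mulmxA hX mul1mx.
have dnz k : dd (mu k) != 0.
  apply/eqP => h0; move: (Xw k); rewrite h0 scale0r => h1.
  by move: (wnz k); rewrite -h1 eqxx.
split=> //.
have hc k : M *m M *m X *m col k W = (mu k ^+ 2 / dd (mu k)) *: col k W.
  have hx : X *m col k W = (dd (mu k))^-1 *: col k W.
    by apply: (scalerI (dnz k)); rewrite Xw scalerA divff // scale1r.
  rewrite -!mulmxA hx -!scalemxAr hM -scalemxAr hM !scalerA.
  by congr (_ *: _); rewrite [RHS]mulrC expr2 mulrA.
have hE : M *m M *m X *m W = W *m diag_mx (\row_k (mu k ^+ 2 / dd (mu k))).
  apply/matrixP => i k; rewrite mul_colE hc mul_mx_diag !mxE.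
  by rewrite mulrC.
have WWt : W *m W^T = 1%:M by apply: mulmx1C.
rewrite -[M *m M *m X]mulmx1 -WWt mulmxA mxtrace_mulC hE mulmxA hW mul1mx.
by rewrite mxtrace_diag; apply: eq_bigr => k _; rewrite mxE.
Qed.

End Tr.


Section Pert.
Variable R : rcfType.
Variables (n : nat) (a alpha : R) (lam : 'I_n -> R) (F : 'M[R]_n).
Hypothesis dnz : forall k, dd a alpha (lam k) != 0.

Let L : 'M[R]_n := diag_mx (\row_k lam k).
Let Y : 'M[R]_n := diag_mx (\row_k (dd a alpha (lam k))^-1).
Let A : 'M[R]_n := L - alpha%:M.
Let D0 := Dm a alpha L.
Let G (eps : R) : 'M[R]_n := a ^+ 2 *: (A *m F + F *m A + eps *: (F *m F)).

Lemma D0_diag : D0 = diag_mx (\row_k dd a alpha (lam k)).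
Proof.
have hA : A = diag_mx (\row_k (lam k - alpha)).
  apply/matrixP => i j; rewrite !mxE; case: eqP => [->|_]; by rewrite ?mulr1n ?mulr0n ?subr0.
rewrite /D0 /Dm -/A hA mul_diag_mx; apply/matrixP => i j; rewrite !mxE.
case: eqP => [->|_]; rewrite ?mulr1n ?mulr0n /dd ?mulr0 ?subr0 //.
Qed.

Lemma YD0 : Y *m D0 = 1%:M.
Proof.
rewrite D0_diag mul_diag_mx; apply/matrixP => i j; rewrite !mxE.
case: eqP => [->|_]; rewrite ?mulr1n ?mulr0n ?mulr0 //.
by rewrite mulVf.
Qed.

Lemma D0Y : D0 *m Y = 1%:M.
Proof. exact: mulmx1C YD0. Qed.

Lemma DQ eps : Dm a alpha (L + eps *: F) = D0 - eps *: G eps.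
Proof.
have h : L + eps *: F - alpha%:M = A + eps *: F by rewrite /A addrAC.
rewrite /D0 /Dm h -/A /G !mulmxDl !mulmxDr -!scalemxAl -!scalemxAr !scalerDr !scalerA.
by apply/matrixP => i j; rewrite !mxE; ring.
Qed.


Lemma A_diag : A = diag_mx (\row_k (lam k - alpha)).
Proof.
apply/matrixP => i j; rewrite !mxE; case: eqP => [->|_]; by rewrite ?mulr1n ?mulr0n ?subr0.
Qed.

Lemma tr_dmd (d e : 'rV[R]_n) (M : 'M[R]_n) :
  \tr (diag_mx d *m M *m diag_mx e) = \sum_k d 0 k * M k k * e 0 k.
Proof. by rewrite /mxtrace; apply: eq_bigr => k _; rewrite mul_mx_diag mul_diag_mx !mxE. Qed.

Definition gp (x : R) := (2 * (1 - alpha ^+ 2 * a ^+ 2) * x + 2 * a ^+ 2 * alpha * x ^+ 2)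
   / dd a alpha x ^+ 2.

Lemma first_order :
  \tr (L *m L *m Y *m (a ^+ 2 *: (A *m F + F *m A)) *m Y) + \tr ((L *m F + F *m L) *m Y)
  = \sum_k F k k * gp (lam k).
Proof.
have hLLY : L *m L *m Y = diag_mx (\row_k (lam k ^+ 2 / dd a alpha (lam k))).
  rewrite /L /Y mul_diag_mx mul_mx_diag; apply/matrixP => i j; rewrite !mxE.
  by case: eqP => [->|_]; rewrite ?mulr1n ?mulr0n ?mulr0 ?mul0r // expr2.
rewrite hLLY /Y tr_dmd /mxtrace -big_split /=; apply: eq_bigr => k _.
rewrite A_diag /L !mul_diag_mx !mul_mx_diag !mxE.
move: (dnz k); rewrite /gp /dd => h.
by field; rewrite exprMn.
Qed.


Lemma pert : exists C delta : R, 0 < delta /\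
  forall eps, 0 < eps -> eps < delta ->
  exists X : 'M[R]_n, X *m Dm a alpha (L + eps *: F) = 1%:M /\
   `|\tr ((L + eps *: F) *m (L + eps *: F) *m X)
     - \tr (L *m L *m Y) - eps * \sum_k F k k * gp (lam k)| <= C * eps ^+ 2.
Proof.
set sY := sn Y; set sA := sn A; set sF := sn F.
set gb := a ^+ 2 * (sA * sF + sF * sA + sF * sF).
set K := sY * gb.
set sL2 := sn (L *m L); set sH := sn (L *m F + F *m L); set sF2 := sn (F *m F).
set C0 := sL2 * sY * gb * sY * gb * (2 * sY) + a ^+ 2 * (sL2 * sY * sF2 * sY)
          + sH * sY * gb * (2 * sY) + sF2 * (2 * sY).
have sY0 : 0 <= sY by apply: sn_ge0.
have sA0 : 0 <= sA by apply: sn_ge0.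
have sF0 : 0 <= sF by apply: sn_ge0.
have gb0 : 0 <= gb.
  by apply: mulr_ge0; rewrite ?sqr_ge0 // !addr_ge0 // mulr_ge0.
have K0 : 0 <= K by apply: mulr_ge0.
have dpos : 0 < 2 * K + 2 by lra.
exists C0, (2 * K + 2)^-1; split; first by rewrite invr_gt0.
move=> eps e0 edel.
have eK : eps * (2 * K + 2) < 1 by rewrite -ltr_pdivlMr // div1r.
have e1 : eps <= 1 by nra.
have sG : sn (G eps) <= gb.
  rewrite /G snZ ger0_norm ?sqr_ge0 //; apply: ler_wpM2l; first by rewrite sqr_ge0.
  apply: (le_trans (snD _ _)); apply: lerD.
    by apply: (le_trans (snD _ _)); apply: lerD; apply: sn_le_mul.
  rewrite snZ (ger0_norm (ltW e0)).
  have := snM F F; rewrite -/sF2 -/sF => h.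
  have : 0 <= sF2 by apply: sn_ge0.
  nra.
set sGe := sn (G eps).
have sG0 : 0 <= sGe by apply: sn_ge0.
have tle : eps * (sY * sGe) <= 1 / 2.
  have : eps * (sY * sGe) <= eps * K.
    by apply: ler_wpM2l; [exact: ltW | apply: ler_wpM2l].
  nra.
have hdet : \det (Dm a alpha (L + eps *: F)) != 0.
  apply/negP => /det0P [v vnz hv].
  move: hv; rewrite DQ mulmxBr -scalemxAr => /eqP; rewrite subr_eq0 => /eqP hv.
  have hv2 : v = eps *: (v *m G eps *m Y).
    by rewrite scalemxAl -hv -mulmxA D0Y mulmx1.
  have : sn v <= eps * (sn v * sGe * sY).
    by rewrite {1}hv2 snZ (ger0_norm (ltW e0)); apply: ler_wpM2l; [exact: ltW | apply: sn_le_mul; [apply: sn_le_mul|]].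
  have sv0 : 0 <= sn v by apply: sn_ge0.
  have -> : eps * (sn v * sGe * sY) = sn v * (eps * (sY * sGe)) by ring.
  move=> h.
  have : sn v <= 0 by nra.
  by move/sn_eq0 => h0; move: vnz; rewrite h0 eqxx.
have hU : Dm a alpha (L + eps *: F) \in unitmx by rewrite unitmxE unitfE.
set X := invmx (Dm a alpha (L + eps *: F)).
exists X; split; first exact: mulVmx.
have hXr : Dm a alpha (L + eps *: F) *m X = 1%:M by exact: mulmxV.
have eqX : X = Y + eps *: (Y *m G eps *m X).
  move: hXr; rewrite DQ mulmxBl -scalemxAl => /eqP; rewrite subr_eq => /eqP h.
  by rewrite -{1}[X]mul1mx -YD0 -!mulmxA h mulmxDr mulmx1 -scalemxAr.
have sX : sn X <= 2 * sY.
  have : sn X <= sY + eps * (sY * sGe * sn X).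
    rewrite {1}eqX; apply: (le_trans (snD _ _)); apply: lerD => //.
    rewrite snZ (ger0_norm (ltW e0)); apply: ler_wpM2l; first exact: ltW.
    by apply: sn_le_mul => //; apply: sn_le_mul.
  have sX0 : 0 <= sn X by apply: sn_ge0.
  have -> : eps * (sY * sGe * sn X) = sn X * (eps * (sY * sGe)) by ring.
  nra.
set Q := L + eps *: F.
set H := L *m F + F *m L.
set G0 := a ^+ 2 *: (A *m F + F *m A).
have hQQ : Q *m Q = L *m L + eps *: H + eps ^+ 2 *: (F *m F).
  rewrite /Q /H mulmxDl !mulmxDr -!scalemxAl -!scalemxAr scalerA.
  by apply/matrixP => i j; rewrite !mxE; ring.
have hG : G eps = G0 + (eps * a ^+ 2) *: (F *m F).
  by rewrite /G /G0 scalerDr scalerA mulrC.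
have t0 : \tr (Q *m Q *m X) = \tr (L *m L *m X) + eps * \tr (H *m X)
          + eps ^+ 2 * \tr (F *m F *m X).
  by rewrite hQQ mulmxDl mulmxDl -!scalemxAl !mxtraceD !mxtraceZ.
have r1 : \tr (L *m L *m X) = \tr (L *m L *m Y) + eps * \tr (L *m L *m Y *m G eps *m X).
  by rewrite {1}eqX mulmxDr -(scalemxAr eps) mxtraceD mxtraceZ !mulmxA.
have r2 : \tr (L *m L *m Y *m G eps *m X) = \tr (L *m L *m Y *m G eps *m Y)
     + eps * \tr (L *m L *m Y *m G eps *m Y *m G eps *m X).
  by rewrite {1}eqX mulmxDr -(scalemxAr eps) mxtraceD mxtraceZ !mulmxA.
have r3 : \tr (L *m L *m Y *m G eps *m Y) = \tr (L *m L *m Y *m G0 *m Y)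
     + eps * (a ^+ 2 * \tr (L *m L *m Y *m (F *m F) *m Y)).
  by rewrite hG mulmxDr mulmxDl -(scalemxAr (eps * a ^+ 2)) -scalemxAl mxtraceD mxtraceZ; ring.
have r4 : \tr (H *m X) = \tr (H *m Y) + eps * \tr (H *m Y *m G eps *m X).
  by rewrite {1}eqX mulmxDr -(scalemxAr eps) mxtraceD mxtraceZ !mulmxA.
rewrite -first_order -/G0 -/H.
set Rm := \tr (L *m L *m Y *m G eps *m Y *m G eps *m X)
     + a ^+ 2 * \tr (L *m L *m Y *m (F *m F) *m Y)
     + \tr (H *m Y *m G eps *m X) + \tr (F *m F *m X).
have key : \tr (Q *m Q *m X) - \tr (L *m L *m Y)
    - eps * (\tr (L *m L *m Y *m G0 *m Y) + \tr (H *m Y)) = eps ^+ 2 * Rm.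
  by rewrite t0 r1 r2 r3 r4 /Rm; ring.
rewrite key normrM (ger0_norm (sqr_ge0 eps)) mulrC; apply: ler_wpM2r; first exact: sqr_ge0.
rewrite /Rm /C0.
have sL20 : 0 <= sL2 by apply: sn_ge0.
apply: (le_trans (ler_normD _ _)); apply: lerD; last first.
  apply: (le_trans (sn_tr _)); apply: sn_le_mul => //.
apply: (le_trans (ler_normD _ _)); apply: lerD; last first.
  apply: (le_trans (sn_tr _)); apply: sn_le_mul => //.
  apply: sn_le_mul => //; apply: sn_le_mul => //.
apply: (le_trans (ler_normD _ _)); apply: lerD; last first.
  rewrite normrM ger0_norm ?sqr_ge0 //; apply: ler_wpM2l; first exact: sqr_ge0.
  apply: (le_trans (sn_tr _)); apply: sn_le_mul => //.
  apply: sn_le_mul => //; apply: sn_le_mul => //.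
apply: (le_trans (sn_tr _)); apply: sn_le_mul => //.
apply: sn_le_mul => //; apply: sn_le_mul => //; apply: sn_le_mul => //.
by apply: sn_le_mul.
Qed.

End Pert.


Section Misc.
Variable R : rcfType.

Lemma eig_bound n (P : 'M[R]_n) (c : 'cV[R]_n) (l a alpha : R) :
  P^T = P -> c != 0 -> P *m c = l *: c ->
  spectral_radius_lt1 (a *: (P - alpha%:M)) -> `|a * (l - alpha)| < 1.
Proof.
move=> sym cnz hc hsp.
set w := c^T.
have hw : w *m (a *: (P - alpha%:M)) = (a * (l - alpha)) *: w.
  rewrite -scalemxAr mulmxBr mul_mx_scalar /w -{1}sym -trmx_mul hc.
  by rewrite -linearZ /= !linearZ /= scalerN -scaleNr -scalerDl scalerA.
have := hsp ((a * (l - alpha))%:C)%C.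
have hev : eigenvalue (map_mx (real_complex R) (a *: (P - alpha%:M))) ((a * (l - alpha))%:C)%C.
  apply/eigenvalueP; exists (map_mx (real_complex R) w).
    by rewrite -map_mxM hw map_mxZ.
  by rewrite map_mx_eq0 /w trmx_eq0.
move=> /(_ hev).
rewrite normc_def /= expr0n /= addr0 sqrtr_sqr.
by rewrite -[X in (_ < X)%R]/((1:R)%:C)%C ltcR.
Qed.


Lemma ebT_mul n (i : 'I_n) m (M : 'M[R]_(n, m)) k : ((ebasis R i)^T *m M) 0 k = M i k.
Proof. by rewrite /ebasis trmx_delta -rowE mxE. Qed.

Lemma uT_mul n (i j : 'I_n) m (M : 'M[R]_(n, m)) k :
  ((ebasis R i - ebasis R j)^T *m M) 0 k = M i k - M j k.
Proof. by rewrite linearB /= mulmxBl mxE [X in _ + X]mxE !ebT_mul. Qed.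

Lemma quad_dP n (i j : 'I_n) (c : 'cV[R]_n) :
  (c^T *m dP R i j *m c) 0 0 = - (c i 0 - c j 0) ^+ 2.
Proof.
rewrite /dP mulmxN mulNmx mxE; congr (- _).
set u := ebasis R i - ebasis R j.
rewrite mulmxA -mulmxA mxE big_ord1.
have -> : (c^T *m u) 0 0 = (u^T *m c) 0 0.
  by rewrite -[c^T *m u]trmxK trmx_mul trmxK mxE.
by rewrite /u uT_mul expr2.
Qed.

Lemma tr_dP n (i j : 'I_n) (M : 'M[R]_n) :
  \tr (dP R i j *m M) = - (M i i + M j j - M i j - M j i).
Proof.
rewrite /dP mulNmx raddfN /=; congr (- _).
set u := ebasis R i - ebasis R j.
rewrite -mulmxA mxtrace_mulC /mxtrace big_ord1.
have -> : (u^T *m M *m u) 0 0 = ((u^T *m M *m u)^T) 0 0 by rewrite [RHS]mxE.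
rewrite trmx_mul /u uT_mul [(_^T) i 0]mxE [(_^T) j 0]mxE !uT_mul; lra.
Qed.


Lemma le_bigmax_in (I : finType) (P : pred I) (F : I -> R) x0 k :
  P k -> F k <= \big[Num.max/x0]_(i | P i) F i.
Proof.
move=> Pk; have : k \in index_enum I by rewrite mem_index_enum.
elim: (index_enum I) => [//|h t IH]; rewrite inE big_cons.
case/orP => [/eqP eqk | kt].
  by rewrite -eqk Pk le_max lexx.
by case: (P h); rewrite ?le_max IH ?orbT.
Qed.

Lemma zeta_facts n (a alpha : R) (lam : 'I_n -> R) :
  (forall k : 'I_n, (0 < val k)%N -> a ^+ 2 * (lam k - alpha) ^+ 2 < 1) ->
  0 <= zeta_max alpha lam /\ a ^+ 2 * zeta_max alpha lam ^+ 2 < 1.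
Proof.
move=> h; rewrite /zeta_max.
apply: (big_ind (fun x => 0 <= x /\ a ^+ 2 * x ^+ 2 < 1)).
- by rewrite expr0n /= mulr0 ltr01.
- by move=> x y hx hy; rewrite maxEle; case: (x <= y).
- move=> k hk; split => //; rewrite real_normK ?num_real //; exact: h.
Qed.

Lemma le_zeta n alpha (lam : 'I_n -> R) k :
  (0 < val k)%N -> `|lam k - alpha| <= zeta_max alpha lam.
Proof. by move=> hk; rewrite /zeta_max; apply: (le_bigmax_in (fun k : 'I_n => `|lam k - alpha|) _ hk). Qed.

Lemma le_min_nonedge n (P : 'M[R]_n) x0 (f g : 'I_n * 'I_n -> R) :
  g x0 <= f x0 -> (forall x, nonedge P x -> g x <= f x) ->
  min_nonedge P x0 g <= min_nonedge P x0 f.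
Proof.
move=> h0 h; rewrite /min_nonedge.
apply: (big_ind2 (fun u v => u <= v)) => //.
by move=> x1 x2 y1 y2 h1 h2; apply: le_min2.
Qed.

End Misc.

Section More.
Variable R : rcfType.

Lemma col_mulmx m n p (A : 'M[R]_(m, n)) (B : 'M[R]_(n, p)) k :
  col k (A *m B) = A *m col k B.
Proof. by apply/matrixP => i j; rewrite !mxE; apply: eq_bigr => l _; rewrite !mxE. Qed.

Lemma quad_col n (V M : 'M[R]_n) k :
  ((col k V)^T *m M *m col k V) 0 0 = (V^T *m M *m V) k k.
Proof.
by rewrite [RHS]mul_colE tr_col -!row_mul mxE.
Qed.

Lemma sc_ineq (z nm D d : R) : z <= 0 -> 0 <= nm -> 0 < D -> (z = 0 \/ D <= d) ->
  z * nm / D ^+ 2 <= z * nm / d ^+ 2.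
Proof.
move=> hz hn hD [->|hd]; first by rewrite !mul0r.
have hd0 : 0 < d by apply: lt_le_trans hD hd.
have hu : (d ^+ 2)^-1 <= (D ^+ 2)^-1.
  rewrite lef_pV2 ?posrE ?exprn_gt0 //; nra.
have hp : z * nm <= 0 by nra.
exact: ler_wnM2l.
Qed.

Lemma affine_rw (s x n c0 y z w : R) :
  s / x + n^-1 * (c0 * y) - (s / x + n^-1 * (c0 * z)) - c0 / n * w = (c0 / n) * (y - z - w).
Proof. ring. Qed.

Lemma tr_conj n (V A M : 'M[R]_n) :
  \tr (V^T *m A *m V *m M) = \tr (A *m (V *m M *m V^T)).
Proof.
by rewrite -[V^T *m A *m V *m M]mulmxA -[V^T *m A *m (V *m M)]mulmxA mxtrace_mulC !mulmxA.
Qed.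

End More.

Unset Implicit Arguments. Set Strict Implicit. Set Printing Implicit Defensive.

Theorem proposition3 (R : rcfType) (N : nat) (a alpha sr2 sw2 : R)
  (P : 'M[R]_N) (lam : 'I_N -> R) (V : 'M[R]_N) (i0 j0 : 'I_N) :
  (2 <= N)%N ->
  0 < alpha -> alpha <= 1 -> 0 <= sr2 -> 0 <= sw2 ->
  P^T = P ->
  (forall i, \sum_(j < N) P i j = 1) ->
  (forall j, \sum_(i < N) P i j = 1) ->
  (forall x : 'cV[R]_N, 0 <= (x^T *m P *m x) 0 0) ->
  (forall i j, 0 <= P i j) ->
  orth_eig P lam V ->
  (forall k l : 'I_N, (k <= l)%N -> lam l <= lam k) ->
  (forall k : 'I_N, val k = 0%N -> lam k = 1) ->
  (forall k : 'I_N, (0 < val k)%N -> lam k < 1) ->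
  (forall k : 'I_N, -1 < lam k) ->
  (forall k : 'I_N, val k = 0%N -> col k V = const_mx (Num.sqrt (N%:R))^-1) ->
  `|a| < 1 / `|alpha| ->
  spectral_radius_lt1 (a *: (P - alpha%:M)) ->
  i0 != j0 -> ~~ (0 < P i0 j0) ->
  (forall i j : 'I_N, i != j -> ~~ (0 < P i j) ->
     forall (lamE : R -> 'I_N -> R) (VE : R -> 'M[R]_N),
       (forall eps, 0 < eps -> orth_eig (Peps P eps i j) (lamE eps) (VE eps)) ->
       exists C delta : R, 0 < delta /\
         forall eps, 0 < eps -> eps < delta ->
           `| msd a alpha sr2 sw2 (lamE eps) - msd a alpha sr2 sw2 lam
              - a ^+ 2 * alpha ^+ 2 * sw2 / N%:R
                * \sum_(k < N) hk a alpha lam V eps i j k | <= C * eps ^+ 2)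
  /\
  (forall eps, 0 < eps ->
     min_nonedge P (i0, j0) (fun x => \sum_(k < N) hk a alpha lam V eps x.1 x.2 k)
     >= min_nonedge P (i0, j0) (fun x => bound_ij a alpha P lam eps x.1 x.2)).
Proof.
move=> hN ha0 ha1 hsr hsw Psym rowS colS psd Pnn [VtV hPV] lam_dec lam1 lam_lt1
  lam_gt hcol0 habs hsp ni0 ne0.
have VVt : V *m V^T = 1%:M by apply: mulmx1C.
set L := diag_mx (\row_k lam k).
have PV : P *m V = V *m L.
  by apply/matrixP => r k; rewrite mul_colE hPV mul_mx_diag !mxE mulrC.
have VtPV : V^T *m P *m V = L by rewrite -mulmxA PV mulmxA VtV mul1mx.
have cc k : ((col k V)^T *m col k V) 0 0 = 1.
  have := congr1 (fun A : 'M[R]_N => A k k) VtV; rewrite !mxE eqxx mulr1n => <-.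
  by apply: eq_bigr => l _; rewrite !mxE.
have colnz k : col k V != 0.
  by apply/eqP => h0; move: (cc k); rewrite h0 mulmx0 mxE => /eqP; rewrite eq_sym oner_eq0.
have dpos k : 0 < dd a alpha (lam k).
  have hx := eig_bound Psym (colnz k) (hPV k) hsp.
  have hn := normr_ge0 (a * (lam k - alpha)).
  rewrite /dd -exprMn -real_normK ?num_real // subr_gt0; nra.
have dnz k : dd a alpha (lam k) != 0 by rewrite (gt_eqF (dpos k)).
split.
  move=> i j nij nPij lamE VE hE.
  set F := V^T *m dP R i j *m V.
  have [C [delta [dl0 hC]]] := pert F dnz.
  set c := a ^+ 2 * alpha ^+ 2 * sw2 / N%:R.
  exists (`|c| * C), delta; split => // eps e0 edel.
  have [X [hX hb]] := hC eps e0 edel.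
  have [VEtVE hVE] := hE eps e0.
  have hM : L + eps *: F = V^T *m Peps P eps i j *m V.
    by rewrite /Peps mulmxDr mulmxDl VtPV -scalemxAr -scalemxAl.
  set W := V^T *m VE eps.
  have WtW : W^T *m W = 1%:M.
    by rewrite /W trmx_mul trmxK -mulmxA (mulmxA V) VVt mul1mx.
  have hMW k : (L + eps *: F) *m col k W = lamE eps k *: col k W.
    by rewrite hM /W !col_mulmx -!mulmxA (mulmxA V) VVt mul1mx hVE scalemxAr.
  have [_ hS1] := trace_eig WtW hMW hX.
  have hL1 k : L *m col k 1%:M = lam k *: col k (1%:M : 'M[R]_N).
    apply/matrixP => r s; rewrite /L mul_diag_mx !mxE.
    by case: eqP => [->|_]; rewrite ?mulr0n ?mulr0 ?mulr1n ?mulr1.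
  have h11 : (1%:M : 'M[R]_N)^T *m 1%:M = 1%:M by rewrite trmx1 mulmx1.
  have [_ hS0] := trace_eig h11 hL1 (YD0 dnz).
  have hsum0 (mu : 'I_N -> R) : \sum_k a ^+ 2 * alpha ^+ 2 * sw2 * mu k ^+ 2
        / (1 - a ^+ 2 * (mu k - alpha) ^+ 2)
      = a ^+ 2 * alpha ^+ 2 * sw2 * \sum_k mu k ^+ 2 / dd a alpha (mu k).
    by rewrite mulr_sumr; apply: eq_bigr => k _; rewrite /dd mulrA.
  have hsumh : \sum_k hk a alpha lam V eps i j k = eps * \sum_k F k k * gp a alpha (lam k).
    rewrite mulr_sumr; apply: eq_bigr => k _; rewrite /hk /zk quad_col -/F /gp /dd; ring.
  rewrite /msd !hsum0 hS1 hS0 hsumh affine_rw normrM -/c -mulrA.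
  by apply: ler_wpM2l.
move=> eps e0.
have lam0 k : 0 <= lam k.
  by have := psd (col k V); rewrite -mulmxA hPV -scalemxAr mxE cc mulr1.
have hal : 0 < 1 - alpha ^+ 2 * a ^+ 2.
  move: habs; rewrite (ger0_norm (ltW ha0)) ltr_pdivlMr // => h.
  have hna := normr_ge0 a.
  rewrite -[a ^+ 2]real_normK ?num_real //; have hp : 0 <= `|a| * alpha by apply: mulr_ge0 => //; exact: ltW.
  nra.
have hx : forall x, nonedge P x ->
    bound_ij a alpha P lam eps x.1 x.2 <= \sum_k hk a alpha lam V eps x.1 x.2 k.
  move=> [i j] /andP [/= nij nPij].
  have Pij0 : P i j = 0 by apply/eqP; rewrite eq_le Pnn andbT leNgt.
  have Pji0 : P j i = 0.
    by move: (congr1 (fun A : 'M[R]_N => A i j) Psym); rewrite mxE Pij0.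
  have PPs : (P *m P) j i = (P *m P) i j.
    by move: (congr1 (fun A : 'M[R]_N => A i j) (trmx_mul P P)); rewrite Psym [LHS]mxE.
  have hlt k : a ^+ 2 * (lam k - alpha) ^+ 2 < 1 by move: (dpos k); rewrite /dd subr_gt0.
  have [z0 hz] := zeta_facts (fun k _ => hlt k).
  set ze := zeta_max alpha lam.
  set D := 1 - a ^+ 2 * ze ^+ 2.
  have D0 : 0 < D by rewrite /D subr_gt0.
  have hD k : (0 < val k)%N -> D <= dd a alpha (lam k).
    move=> hk; have h1 := le_zeta alpha lam hk; have h2 := normr_ge0 (lam k - alpha).
    rewrite /D /dd lerD2l lerN2; apply: ler_wpM2l; first exact: sqr_ge0.
    rewrite -[(lam k - alpha) ^+ 2]real_normK ?num_real //; move: h1; rewrite -/ze => h1; nra.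
  have hkk k : zk V eps i j k * (2 * (1 - alpha ^+ 2 * a ^+ 2) * lam k
                    + 2 * a ^+ 2 * alpha * lam k ^+ 2) / D ^+ 2
               <= hk a alpha lam V eps i j k.
    rewrite /hk; apply: sc_ineq => //.
    - rewrite /zk quad_dP; apply: mulr_ge0_le0; first exact: ltW.
      by rewrite oppr_le0 sqr_ge0.
    - apply: addr_ge0.
        apply: mulr_ge0; [apply: mulr_ge0 => //; exact: ltW | exact: lam0].
      apply: mulr_ge0; last exact: sqr_ge0.
      apply: mulr_ge0; last exact: ltW.
      apply: mulr_ge0 => //; exact: sqr_ge0.
    - case: (ltnP 0 k) => hk; first by right; apply: hD.
      left; have hk0 : val k = 0%N by apply/eqP; rewrite -leqn0.
      by rewrite /zk quad_dP hcol0 // !mxE subrr expr0n oppr0 mulr0.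
  rewrite /bound_ij -/ze -/D.
  apply: le_trans (ler_sum _ (fun k _ => hkk k)).
  rewrite -mulr_suml.
  set F := V^T *m dP R i j *m V.
  have VLVt : V *m L *m V^T = P by rewrite -PV -mulmxA VVt mulmx1.
  have VLLVt : V *m (L *m L) *m V^T = P *m P.
    by rewrite mulmxA -PV -!mulmxA (mulmxA V L) VLVt.
  have t1 : \tr (F *m L) = \sum_k F k k * lam k.
    by apply: eq_bigr => k _; rewrite mul_mx_diag !mxE.
  have t2 : \tr (F *m (L *m L)) = \sum_k F k k * lam k ^+ 2.
    have LL : L *m L = diag_mx (\row_k lam k ^+ 2).
      apply/matrixP => r t; rewrite /L mul_diag_mx !mxE.
      by case: eqP => [->|_]; rewrite ?mulr0n ?mulr0 ?mulr1n // expr2.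
    by apply: eq_bigr => k _; rewrite LL mul_mx_diag !mxE.
  have Hs : \sum_k zk V eps i j k * (2 * (1 - alpha ^+ 2 * a ^+ 2) * lam k
                    + 2 * a ^+ 2 * alpha * lam k ^+ 2)
      = eps * (2 * (1 - alpha ^+ 2 * a ^+ 2) * \tr (F *m L)
               + 2 * a ^+ 2 * alpha * \tr (F *m (L *m L))).
    rewrite t1 t2 !mulr_sumr -big_split mulr_sumr; apply: eq_bigr => k _.
    rewrite /zk quad_col -/F /=; ring.
  rewrite Hs /F !tr_conj VLVt VLLVt !tr_dP Pij0 Pji0 PPs.
  by rewrite le_eqVlt; apply/orP; left; apply/eqP; ring.
apply: le_min_nonedge; last exact: hx.
by apply: hx; rewrite /nonedge ni0 ne0.
Qed.
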